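(* Let $F$ be a field of characteristic zero and $n,m$ natural numbers. The set of elements $l\in W(n,m)$ such that every standard basis element $b=e^{\alpha}x^{\beta}\partial_k$ of $W(n,m)$ is an eigenvector of $\mathrm{ad}\,l$ (i.e. $[b,l]\in Fb$ for all such $b$) is exactly the $m$-dimensional subspace spanned by $\{x_t\partial_t: n+1\le t\le n+m\}$; this is a maximal torus of $W(n,m)$ with respect to the standard basis.
   Context: Let $A_{n,m}$ be the commutative $F$-algebra with $F$-basis the symbols $e^{\alpha}x^{\beta}=e^{a_1x_1}\cdots e^{a_nx_n}x_1^{b_1}\cdots x_{n+m}^{b_{n+m}}$, $\alpha\in\mathbb Z^n$, $\beta\in\mathbb Z^{n+m}$, with multiplication $e^{\alpha}x^{\beta}\cdot e^{\gamma}x^{\delta}=e^{\alpha+\gamma}x^{\beta+\delta}$. For $1\le i\le n+m$, $\partial_i(e^{\alpha}x^{\beta})=a_i e^{\alpha}x^{\beta}+b_i e^{\alpha}x^{\beta-\epsilon_i}$, where $a_i:=0$ for $i>n$. $W(n,m)$ is the Lie algebra with standard basis $\{e^{\alpha}x^{\beta}\partial_i\}$ and bracket $[f\partial_i,g\partial_j]=f\partial_i(g)\partial_j-g\partial_j(f)\partial_i$. Here $x_t\partial_t$ denotes $x^{\epsilon_t}\partial_t$. *)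

(* Defs.v *)
From HB Require Import structures.
From mathcomp Require Import all_boot all_order all_algebra.
From mathcomp Require Import finmap.
Set Implicit Arguments. Unset Strict Implicit. Unset Printing Implicit Defensive.
Import Order.TTheory GRing.Theory Num.Theory.
Local Open Scope ring_scope.


(* Index of a standard basis element  e^alpha x^beta d_k  of W(n,m):
   (alpha, beta, k) with alpha in Z^n, beta in Z^(n+m), k in {0..n+m-1}. *)
Definition Widx (n m : nat) : Type :=
  ({ffun 'I_n -> int} * {ffun 'I_(n + m) -> int} * 'I_(n + m))%type.

Definition acoef (n m : nat) (alpha : {ffun 'I_n -> int}) (i : 'I_(n + m)) : int :=
  match split i with inl k => alpha k | inr _ => 0 end.

Definition eps (n m : nat) (i : 'I_(n + m)) : {ffun 'I_(n + m) -> int} :=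
  [ffun j => ((j == i) : nat)%:Z].

Definition ffadd (n : nat) (u v : {ffun 'I_n -> int}) : {ffun 'I_n -> int} :=
  [ffun j => u j + v j].
Definition ffsub (n : nat) (u v : {ffun 'I_n -> int}) : {ffun 'I_n -> int} :=
  [ffun j => u j - v j].

Definition bvec (F : pzRingType) (n m : nat) (p : Widx n m) : Widx n m -> F :=
  fun q => ((q == p) : nat)%:R.

(* Coordinates of [e^alpha x^beta d_i , e^gamma x^delta d_j] in the standard basis:
   f d_i(g) d_j - g d_j(f) d_i  with
   d_i(e^gamma x^delta) = c_i e^gamma x^delta + delta_i e^gamma x^(delta - eps_i). *)
Definition brb (F : pzRingType) (n m : nat) (p q : Widx n m) : Widx n m -> F :=
  let: (alpha, beta, i) := p in
  let: (gamma, delta, j) := q in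
  let ag := [ffun k => alpha k + gamma k] in
  let bd := ffadd beta delta in
  fun r =>
    (acoef gamma i)%:~R * bvec F (ag, bd, j) r
    + (delta i)%:~R * bvec F (ag, ffsub bd (eps i), j) r
    - (acoef alpha j)%:~R * bvec F (ag, bd, i) r
    - (beta j)%:~R * bvec F (ag, ffsub bd (eps j), i) r.

Notation W F n m := {fsfun Widx n m -> F with 0}.

(* coordinates of [b, l] for a basis element b and l in W(n,m) (bilinear extension) *)
Definition brl (F : pzRingType) (n m : nat) (b : Widx n m) (l : W F n m) : Widx n m -> F :=
  fun r => \sum_(q <- finsupp l) l q * brb F b q r.

Definition eigen_basis (F : pzRingType) (n m : nat) (b : Widx n m) (l : W F n m) : Prop :=
  exists c : F, forall r, brl b l r = c * bvec F b r.

Definition xd (n m : nat) (t : 'I_(n + m)) : Widx n m := ([ffun _ => 0], eps t, t).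

Definition torus_elt (F : pzRingType) (n m : nat) (c : 'I_m -> F) : Widx n m -> F :=
  fun r => \sum_(t < m) c t * bvec F (xd (rshift n t)) r.

(* Main.v *)
Require Import Defs.
From HB Require Import structures.
From mathcomp Require Import all_boot all_order all_algebra.
From mathcomp Require Import finmap zify ring.
Set Implicit Arguments. Unset Strict Implicit. Unset Printing Implicit Defensive.
Import GRing.Theory.
Local Open Scope ring_scope.

Section S.
Variables (F : fieldType) (n m : nat).
Local Notation Idx := (Widx n m).
Local Notation I := ('I_(n + m)).
Local Notation ff := ({ffun 'I_(n + m) -> int}).
Local Notation fa := ({ffun 'I_n -> int}).

Lemma sum_pick (s : seq Idx) (H : Idx -> F) q0 : uniq s ->
  \sum_(q <- s) H q * bvec F q0 q = if q0 \in s then H q0 else 0.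
Proof.
elim: s => [|x s IH]; first by rewrite big_nil.
rewrite /= big_cons in_cons => /andP [xs us]; rewrite IH // /bvec.
have [<-|ne] := eqVneq x q0.
  by rewrite (negbTE xs) mulr1 addr0 orTb.
by rewrite mulr0 add0r.
Qed.

Lemma supp_pick (l : W F n m) (H : Idx -> F) q0 :
  \sum_(q <- finsupp l) l q * H q * bvec F q0 q = l q0 * H q0.
Proof.
rewrite (sum_pick (fun q => l q * H q)) ?fset_uniq //.
case: finsuppP => //; by rewrite mul0r.
Qed.

Lemma eqA (a g g' : fa) : (ffadd a g == ffadd a g') = (g' == g).
Proof.
apply/eqP/eqP => [H|->//]; apply/ffunP => x.
by move/ffunP/(_ x): H; rewrite !ffunE => /addrI ->.
Qed.

Lemma eqB (b d d' : ff) k :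
  (ffadd b d == ffsub (ffadd b d') (eps k)) = (d' == ffadd d (eps k)).
Proof.
apply/eqP/eqP => [H|->]; apply/ffunP => x.
  move/ffunP/(_ x): H; rewrite /ffadd /ffsub !ffunE; move=> H; apply: (addrI (b x)); by rewrite addrA H subrK.
rewrite /ffadd /ffsub !ffunE. by rewrite addrA addrK.
Qed.

Lemma eqC (b d d' : ff) : (ffadd b d == ffadd b d') = (d' == d).
Proof.
apply/eqP/eqP => [H|->//]; apply/ffunP => x.
by move/ffunP/(_ x): H; rewrite !ffunE => /addrI ->.
Qed.

Lemma sum_ind (c : I -> F) (g : fa) (f : I -> ff) (q : Idx) :
  \sum_i c i * bvec F (g, f i, i) q = ((q.1.1 == g) && (q.1.2 == f q.2))%:R * c q.2.
Proof.
case: q => [[g' d'] j'] /=.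
rewrite (bigD1 j') //= big1 => [|i ne].
  by rewrite addr0 /bvec !xpair_eqE eqxx andbT mulrC.
by rewrite /bvec !xpair_eqE (eq_sym j') (negbTE ne) andbF mulr0.
Qed.


Lemma epsE (k x : I) : eps k x = ((x == k) : nat)%:Z.
Proof. by rewrite /eps ffunE. Qed.

Lemma ffaddE (N : nat) (u v : {ffun 'I_N -> int}) x : ffadd u v x = u x + v x.
Proof. by rewrite /ffadd ffunE. Qed.

Lemma brb_pt (a : fa) (b : ff) k (g : fa) (d : ff) j (q : Idx) :
  brb F (a,b,k) q (ffadd a g, ffadd b d, j) =
   (acoef g k)%:~R * bvec F (g,d,j) q + (d k + 1)%:~R * bvec F (g, ffadd d (eps k), j) q
   - (j == k)%:R * \sum_i (acoef a i)%:~R * bvec F (g,d,i) q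
   - (j == k)%:R * \sum_i (b i)%:~R * bvec F (g, ffadd d (eps i), i) q.
Proof.
case: q => [[g' d'] j']; rewrite !sum_ind /=.
rewrite /brb /bvec -[[ffun k => a k + g' k]]/(ffadd a g') !xpair_eqE eqA eqC !eqB.
case E: (g' == g); last by rewrite !(mulr0, mul0r, subr0, addr0).
move/eqP: E => E; subst g'.
rewrite /= (eq_sym j').
congr (_ + _ - _ - _).
- case E: (d' == ffadd d (eps k)); rewrite ?mulr0 //.
  move/eqP: E => E; subst d'.
  by rewrite ffaddE epsE eqxx.
- by case: (d' == d); case: (j == k); rewrite /= ?(mulr0,mul0r,mulr1,mul1r).
- by case: (d' == _); case: (j == k); rewrite /= ?(mulr0,mul0r,mulr1,mul1r).
Qed.

Lemma supp_pick' (l : W F n m) (c : F) q0 :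
  \sum_(q <- finsupp l) l q * (c * bvec F q0 q) = c * l q0.
Proof.
have := supp_pick l (fun _ => c) q0; rewrite mulrC => <-.
by apply: eq_bigr => q _; rewrite mulrA.
Qed.

Lemma supp_sum (l : W F n m) (e : F) (c : I -> F) (g : fa) (f : I -> ff) :
  \sum_(q <- finsupp l) l q * (e * \sum_i c i * bvec F (g, f i, i) q)
  = e * \sum_i c i * l (g, f i, i).
Proof.
under eq_bigr => q _ do rewrite mulrCA mulr_sumr.
rewrite -mulr_sumr exchange_big /=; congr (_ * _).
by apply: eq_bigr => i _; rewrite supp_pick'.
Qed.

Lemma brl_formula (l : W F n m) (a : fa) (b : ff) k (g : fa) (d : ff) j :
  brl (a,b,k) l (ffadd a g, ffadd b d, j) =
   (acoef g k)%:~R * l (g,d,j) + (d k + 1)%:~R * l (g, ffadd d (eps k), j)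
   - (j == k)%:R * \sum_i (acoef a i)%:~R * l (g,d,i)
   - (j == k)%:R * \sum_i (b i)%:~R * l (g, ffadd d (eps i), i).
Proof.
rewrite /brl.
under eq_bigr => q _ do rewrite brb_pt !mulrBr mulrDr.
rewrite !sumrB big_split /= !supp_pick' !supp_sum.
by [].
Qed.

Notation z0 := ([ffun _ => 0] : fa).
Notation zf := ([ffun _ => 0] : ff).

Lemma acoef_l (g : fa) k0 : @acoef n m g (lshift m k0) = g k0.
Proof. by have := unsplitK (inl _ k0); rewrite /acoef /= => ->. Qed.

Lemma acoef_r (g : fa) t : @acoef n m g (rshift n t) = 0.
Proof. by have := unsplitK (inr _ t); rewrite /acoef /= => ->. Qed.

Lemma acoef0 (i : I) : @acoef n m z0 i = 0.
Proof. by rewrite /acoef; case: split => x //; rewrite ffunE. Qed.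

Lemma lr_neq (x : 'I_n) (t : 'I_m) : (lshift m x == rshift n t) = false.
Proof. apply/eqP => /(congr1 val) /=; have := ltn_ord x; lia. Qed.

Lemma intr_neq0 (charF0 : [pchar F] =i pred0) (z : int) : z != 0 -> (z%:~R : F) != 0.
Proof.
have H := (pcharf0P F).1 charF0.
case: z => k /=.
  by move=> nz; rewrite H; apply: contra nz => /eqP ->.
by rewrite NegzE mulrNz oppr_eq0 H.
Qed.

Lemma torus_val (c : 'I_m -> F) (g : fa) (d : ff) (j : I) :
  torus_elt c (g, d, j) =
  if (g == z0) && (d == eps j) then (match split j with inr t => c t | inl _ => 0 end) else 0.
Proof.
rewrite /torus_elt /bvec /xd.
case E: ((g == z0) && (d == eps j)); last first.
  apply: big1 => t _; rewrite !xpair_eqE.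
  case E2: (j == rshift n t); last by rewrite andbF mulr0.
  by move/eqP: E2 => E2; subst j; rewrite E mulr0.
move/andP: E => [/eqP -> /eqP ->].
case: splitP => [x Ej|t Ej].
  have -> : j = lshift m x by apply: val_inj.
  apply: big1 => t _; rewrite !xpair_eqE.
  by rewrite lr_neq andbF mulr0.
have -> : j = rshift n t by apply: val_inj.
rewrite (bigD1 t) //= big1 => [|t' ne].
  by rewrite !xpair_eqE !eqxx mulr1 addr0.
rewrite !xpair_eqE (inj_eq (@rshift_inj _ _)) (eq_sym t) (negbTE ne) andbF mulr0 //.
Qed.

Lemma sum_eps (f : I -> F) (j : I) : \sum_i ((eps j i)%:~R : F) * f i = f j.
Proof.
rewrite (bigD1 j) //= big1 => [|i ne]; first by rewrite epsE eqxx mul1r addr0.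
by rewrite epsE (negbTE ne) mul0r.
Qed.

Lemma sum_zf (f : I -> F) : \sum_i (((zf : ff) i)%:~R : F) * f i = 0.
Proof. by apply: big1 => i _; rewrite ffunE mul0r. Qed.

Lemma sum_a0 (f : I -> F) : \sum_i ((@acoef n m z0 i)%:~R : F) * f i = 0.
Proof. by apply: big1 => i _; rewrite acoef0 mul0r. Qed.

Lemma eig_zero (l : W F n m) (HE : forall b, eigen_basis b l) (p r : Idx) :
  r != p -> brl p l r = 0.
Proof. by move=> ne; case: (HE p) => c ->; rewrite /bvec (negbTE ne) mulr0. Qed.

Lemma stepC (l : W F n m) (HE : forall b, eigen_basis b l) j : l (z0, zf, j) = 0.
Proof.
pose negf : ff := [ffun i => - eps j i].
have := @eig_zero l HE (z0, eps j, j) (ffadd z0 z0, ffadd (eps j) negf, j).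
rewrite brl_formula acoef0 sum_a0 sum_eps mul0r add0r mulr0 subr0.
have -> : negf j + 1 = 0 by rewrite ffunE epsE eqxx.
have -> : ffadd negf (eps j) = zf by apply/ffunP => x; rewrite !ffunE addNr.
rewrite mul0r sub0r eqxx mul1r => H; apply/eqP; rewrite -oppr_eq0; apply/eqP/H.
rewrite !xpair_eqE eqxx andbT; apply/negP => /andP [_ /eqP /ffunP /(_ j)].
by rewrite ffaddE /negf !ffunE eqxx addrN.
Qed.

Lemma stepB (charF0 : [pchar F] =i pred0) (l : W F n m) (HE : forall b, eigen_basis b l)
  (d : ff) j k : d k != 0 -> (z0, d, j) != (z0, eps k, k) -> l (z0, d, j) = 0.
Proof.
move=> dk ne.
have := @eig_zero l HE (z0, zf, k) (ffadd z0 z0, ffadd zf (ffsub d (eps k)), j).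
rewrite brl_formula acoef0 sum_a0 sum_zf mul0r add0r !mulr0 !subr0.
have -> : ffadd (ffsub d (eps k)) (eps k) = d.
  apply/ffunP => x; rewrite ffaddE /ffsub !ffunE. by rewrite -addrA addNr addr0.
have -> : ffsub d (eps k) k + 1 = d k.
  by rewrite /ffsub !ffunE eqxx subrK.
move=> H; have /eqP : (d k)%:~R * l (z0, d, j) = 0.
  apply: H; rewrite !xpair_eqE; apply: contra ne => /andP [/andP [_ /eqP E] /eqP ->].
  rewrite !xpair_eqE !eqxx /= andbT; apply/eqP/ffunP => x.
  move/ffunP/(_ x): E; rewrite ffaddE /ffsub !ffunE add0r => /eqP.
  by rewrite subr_eq0 => /eqP.
by rewrite mulf_eq0 (negbTE (intr_neq0 charF0 dk)) /= => /eqP.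
Qed.

Lemma stepA (charF0 : [pchar F] =i pred0) (l : W F n m) (HE : forall b, eigen_basis b l)
  (g : fa) k0 (d : ff) j : g k0 != 0 -> l (g, d, j) = 0.
Proof.
move=> gk.
set k := lshift m k0.
have rel : forall d' : ff, (g k0)%:~R * l (g, d', j) = - ((d' k + 1)%:~R * l (g, ffadd d' (eps k), j)).
  move=> d'.
  have := @eig_zero l HE (z0, zf, k) (ffadd z0 g, ffadd zf d', j).
  rewrite brl_formula /k acoef_l -/k sum_a0 sum_zf !mulr0 !subr0 => H; apply/eqP; rewrite -addr_eq0.
  apply/eqP/H; rewrite !xpair_eqE; apply/negP => /andP [/andP [/eqP /ffunP /(_ k0) E _] _].
  by move: E; rewrite ffaddE !ffunE add0r => E; rewrite E eqxx in gk.
set B := \max_(q <- finsupp l) `|q.1.2 k|%N.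
have out : forall d' : ff, (B%:Z < d' k) -> l (g, d', j) = 0.
  move=> d' Hd; apply: fsfun_dflt; apply/negP => Hin.
  have := @leq_bigmax_seq _ _ xpredT (fun q : Idx => `|q.1.2 k|%N) _ Hin isT.
  rewrite -/B /= => Hle.
  have : d' k <= `|d' k|%N%:Z by rewrite abszE Num.Theory.ler_norm.
  lia.
have ind : forall (N : nat) (d' : ff), (B%:Z + 1 - N%:Z <= d' k) -> l (g, d', j) = 0.
  elim => [|N IH] d' H; first by apply: out; lia.
  have H0 : l (g, ffadd d' (eps k), j) = 0.
    by apply: IH; rewrite ffaddE epsE eqxx; lia.
  have /eqP := rel d'; rewrite H0 mulr0 oppr0 mulf_eq0 (negbTE (intr_neq0 charF0 gk)) /=.
  by move/eqP.
pose z : int := B%:Z + 1 - d k.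
apply: (ind (absz z) d).
have : z <= (absz z)%:Z by rewrite abszE Num.Theory.ler_norm.
rewrite /z; lia.
Qed.

Lemma acoef_unit k0 (i : I) :
  @acoef n m [ffun x => ((x == k0) : nat)%:Z] i = eps (lshift m k0) i.
Proof.
rewrite epsE /acoef; case: splitP => [x Ex|t Et].
  have -> : i = lshift m x by apply: val_inj.
  by rewrite ffunE (inj_eq (@lshift_inj _ _)).
have -> : i = rshift n t by apply: val_inj.
by rewrite eq_sym lr_neq.
Qed.

Lemma stepD (charF0 : [pchar F] =i pred0) (l : W F n m) (HE : forall b, eigen_basis b l) k0 :
  l (z0, eps (lshift m k0), lshift m k0) = 0.
Proof.
set k := lshift m k0.
pose al : fa := [ffun x => ((x == k0) : nat)%:Z].
have := @eig_zero l HE (al, zf, k) (ffadd al z0, ffadd zf (eps k), k).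
rewrite brl_formula acoef0 sum_zf mul0r add0r mulr0 subr0 eqxx mul1r.
under eq_bigr => i _ do rewrite acoef_unit -/k.
rewrite sum_eps.
rewrite (@stepB charF0 l HE (ffadd (eps k) (eps k)) k k); first last.
- rewrite !xpair_eqE !eqxx /= andbT; apply/negP => /eqP /ffunP /(_ k).
  by rewrite /ffadd /eps !ffunE eqxx.
- by rewrite /ffadd /eps !ffunE eqxx.
rewrite mulr0 sub0r => H; apply/eqP; rewrite -oppr_eq0; apply/eqP/H.
rewrite !xpair_eqE; apply/negP => /andP [/andP [_ /eqP /ffunP E] _]; move: (E k).
by rewrite /ffadd /eps !ffunE eqxx.
Qed.

Lemma torus_xd (c : 'I_m -> F) t : torus_elt c (xd (rshift n t)) = c t.
Proof.
rewrite /xd torus_val !eqxx /=.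
by have := unsplitK (inr _ t); rewrite /= => ->.
Qed.

Lemma supp_torus (l : W F n m) (c : 'I_m -> F) (Hl : forall r, l r = torus_elt c r)
  (G : Idx -> F) :
  \sum_(q <- finsupp l) l q * G q = \sum_t c t * G (xd (rshift n t)).
Proof.
under eq_bigr => q _ do rewrite Hl /torus_elt mulr_suml.
rewrite exchange_big /=; apply: eq_bigr => t _.
under eq_bigr => q _ do rewrite -mulrA (mulrC (bvec _ _ _)) mulrA.
rewrite (sum_pick (fun q => c t * G q)) ?fset_uniq //.
case: ifP => // /negbT nin.
have := fsfun_dflt nin; rewrite Hl torus_xd => ->.
by rewrite mul0r.
Qed.

Lemma brb_xd (a : fa) (bb : ff) k t r :
  brb F (a, bb, k) (xd (rshift n t)) r =
  (((k == rshift n t) : nat)%:R - (bb (rshift n t))%:~R) * bvec F (a, bb, k) r.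
Proof.
rewrite /brb /xd acoef0 acoef_r mul0r add0r mul0r subr0.
have -> : [ffun i => a i + [ffun=> 0] i] = a by apply/ffunP => i; rewrite !ffunE addr0.
have -> : ffsub (ffadd bb (eps (rshift n t))) (eps (rshift n t)) = bb.
  by apply/ffunP => i; rewrite /ffsub /ffadd !ffunE addrK.
rewrite mulrBl epsE; congr (_ - _).
case E: (k == rshift n t); last by rewrite !mul0r.
move/eqP: E => E; subst k.
have -> : ffsub (ffadd bb (eps (rshift n t))) (eps (rshift n t)) = bb.
  by apply/ffunP => i; rewrite /ffsub /ffadd !ffunE addrK.
by [].
Qed.

Lemma forward (charF0 : [pchar F] =i pred0) (l : W F n m) (HE : forall b, eigen_basis b l) :
  forall r, l r = torus_elt (fun t => l (xd (rshift n t))) r.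
Proof.
case=> [[g d] j]; rewrite torus_val.
case Eg: (g == z0); last first.
  have [k0 gk] : exists k0, g k0 != 0.
    apply/existsP; apply: contraFT Eg; rewrite negb_exists => /forallP H.
    by apply/eqP/ffunP => x; rewrite ffunE; apply/eqP; rewrite -[_ == _]negbK H.
  by rewrite /= (stepA charF0 HE d j gk).
move/eqP: Eg => ->; rewrite /=.
case Ed: (d == eps j).
  move/eqP: Ed => ->.
  case: splitP => [x Ex|t Et].
    have -> : j = lshift m x by apply: val_inj.
    exact: stepD.
  have -> : j = rshift n t by apply: val_inj.
  by [].
case Ez: (d == zf).
  by move/eqP: Ez => ->; apply: stepC.
have [k dk] : exists k, d k != 0.
  apply/existsP; apply: contraFT Ez; rewrite negb_exists => /forallP H.
  by apply/eqP/ffunP => x; rewrite ffunE; apply/eqP; rewrite -[_ == _]negbK H.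
apply: (stepB charF0 HE dk).
rewrite !xpair_eqE eqxx /=; apply/negP => /andP [/eqP E1 /eqP E2].
by subst; rewrite eqxx in Ed.
Qed.

End S.

Unset Implicit Arguments.
Set Strict Implicit.

Theorem proposition1 (F : fieldType) (n m : nat) (charF0 : [pchar F] =i pred0) :
  (forall l : W F n m,
     (forall b : Widx n m, eigen_basis b l) <->
     (exists c : 'I_m -> F, forall r, l r = @torus_elt F n m c r))
  /\ (forall c : 'I_m -> F, (forall r, @torus_elt F n m c r = 0) -> forall t, c t = 0).
Proof.
split; last first.
  by move=> c H t; rewrite -(@torus_xd F n m c t) H.
move=> l; split.
  by move=> HE; exists (fun t => l (xd (rshift n t))); apply: forward.
case=> c Hl [[a bb] k].
exists (\sum_t c t * (((k == rshift n t) : nat)%:R - (bb (rshift n t))%:~R)) => r.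
rewrite /brl (supp_torus Hl (fun q => brb F (a, bb, k) q r)) mulr_suml.
by apply: eq_bigr => t _; rewrite brb_xd mulrA.
Qed.
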